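(* Let $T\in\mathbb{N}$, let $\beta_1,\dots,\beta_T\in(0,1)$, set $\alpha_t=1-\beta_t$ and $\bar\alpha_t=\prod_{i=1}^t\alpha_i$, and let $\sigma_t\ge 0$ be such that $1-\bar\alpha_{t-1}-\sigma_t^2\ge 0$. Fix $t\in\{2,\dots,T\}$ and $\bm x_t\in\mathbb{R}^d$. For $\bm x_0\in\mathbb{R}^d$ let $$p(\bm x_{t-1}\mid \bm x_t,\bm x_0)=\mathcal{N}\Big(\bm x_{t-1};\ \sqrt{\bar\alpha_{t-1}}\,\bm x_0+\sqrt{1-\bar\alpha_{t-1}-\sigma_t^2}\,\tfrac{\bm x_t-\sqrt{\bar\alpha_t}\,\bm x_0}{\sqrt{1-\bar\alpha_t}},\ \sigma_t^2\mathbf{I}\Big).$$ Let the noise distribution be the Gaussian mixture $$p_\theta^\epsilon(\epsilon_t\mid \bm x_t)=\sum_{k=1}^K\pi_{\theta,k}\,\mathcal{N}\big(\epsilon_t;\bm\mu^\epsilon_{\theta,k}(\bm x_t,t),\bm\Sigma^\epsilon_{\theta,k}(\bm x_t,t)\big),$$ with $\pi_{\theta,k}\in[0,1]$, $\sum_k\pi_{\theta,k}=1$, means $\bm\mu^\epsilon_{\theta,k}(\bm x_t,t)\in\mathbb{R}^d$ and positive (semi-)definite covariances $\bm\Sigma^\epsilon_{\theta,k}(\bm x_t,t)$. Define the reverse distribution $$p_\theta(\bm x_{t-1}\mid\bm x_t)=\int_{\mathbb{R}^d} p\Big(\bm x_{t-1}\,\Big|\,\bm x_t,\ \bm x_0=\tfrac{\bm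 x_t-\sqrt{1-\bar\alpha_t}\,\epsilon_t}{\sqrt{\bar\alpha_t}}\Big)\,p_\theta^\epsilon(\epsilon_t\mid\bm x_t)\,d\epsilon_t .$$ Then $$p_\theta(\bm x_{t-1}\mid\bm x_t)=\sum_{k=1}^K\pi_{\theta,k}\,\mathcal{N}\Big(\bm x_{t-1};\ \sqrt{\bar\alpha_{t-1}}\,\hat{\bm x}_{0,k}+\lambda_t\,\bm\mu^\epsilon_{\theta,k}(\bm x_t,t),\ \gamma_t^2\,\bm\Sigma^\epsilon_{\theta,k}(\bm x_t,t)+\sigma_t^2\mathbf{I}\Big),$$ where $\hat{\bm x}_{0,k}=\frac{\bm x_t-\sqrt{1-\bar\alpha_t}\,\bm\mu^\epsilon_{\theta,k}(\bm x_t,t)}{\sqrt{\bar\alpha_t}}$, $\lambda_t=\sqrt{1-\bar\alpha_{t-1}-\sigma_t^2}$ and $\gamma_t=\lambda_t-\frac{\sqrt{1-\bar\alpha_t}}{\sqrt{\alpha_t}}$.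
   Context: This is the DDIM (denoising diffusion implicit model) framework: the forward noising satisfies $\bm x_t=\sqrt{\bar\alpha_t}\bm x_0+\sqrt{1-\bar\alpha_t}\,\epsilon_t$, so conditioning on $\bm x_0$ is equivalent to conditioning on the noise $\epsilon_t=(\bm x_t-\sqrt{\bar\alpha_t}\bm x_0)/\sqrt{1-\bar\alpha_t}$. The distribution $p_\theta^\epsilon(\cdot\mid\bm x_t)$ is a learned (neural-network-parametrized) model of the distribution of $\epsilon_t$ given $\bm x_t$. *)

(* Defs.v *)
From HB Require Import structures.
From mathcomp Require Import all_boot all_order all_algebra.
From mathcomp Require Import all_classical all_reals all_analysis.
Set Implicit Arguments. Unset Strict Implicit. Unset Printing Implicit Defensive.
Import Order.TTheory GRing.Theory Num.Theory.
Local Open Scope ring_scope.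

Section Defs.
Variable R : realType.

Definition posdef (d : nat) (S : 'M[R]_d) : Prop :=
  S^T = S /\ forall v : 'cV[R]_d, v != 0 -> 0 < (v^T *m S *m v) ord0 ord0.

Definition gauss_pdf (d : nat) (m : 'cV[R]_d) (S : 'M[R]_d) (x : 'cV[R]_d) : R :=
  (Num.sqrt ((2 * pi) ^+ d * \det S))^-1 *
  expR (- (((x - m)^T *m invmx S *m (x - m)) ord0 ord0) / 2).

(* Iterated Lebesgue integral over R^n of a function of n real coordinates,
   given as a function on sequences (only the first n entries are used). *)
Fixpoint iter_integral (n : nat) (f : seq R -> \bar R) : \bar R :=
  match n with
  | 0 => f [::]
  | n'.+1 => (\int[@lebesgue_measure R]_(x in [set: R])
                 iter_integral n' (fun s => f (x :: s)))%E
  end.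

(* Lebesgue integral over R^d (for nonnegative integrands, by Tonelli). *)
Definition integral_Rd (d : nat) (g : 'cV[R]_d -> \bar R) : \bar R :=
  iter_integral d (fun s => g (\col_(i < d) nth 0 s i)).

Definition alpha (beta : nat -> R) (i : nat) : R := 1 - beta i.
Definition alpha_bar (beta : nat -> R) (t : nat) : R :=
  \prod_(1 <= i < t.+1) alpha beta i.

Definition ddim_cond_pdf (d : nat) (beta : nat -> R) (sigma : R) (t : nat)
    (xt x0 xprev : 'cV[R]_d) : R :=
  gauss_pdf
    (Num.sqrt (alpha_bar beta t.-1) *: x0 +
     Num.sqrt (1 - alpha_bar beta t.-1 - sigma ^+ 2) *:
       ((Num.sqrt (1 - alpha_bar beta t))^-1 *:
          (xt - Num.sqrt (alpha_bar beta t) *: x0)))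
    (sigma ^+ 2 *: 1%:M) xprev.

Definition mixture_pdf (d K : nat) (pi_ : 'I_K -> R) (mu : 'I_K -> 'cV[R]_d)
    (Sig : 'I_K -> 'M[R]_d) (eps : 'cV[R]_d) : R :=
  \sum_(k < K) pi_ k * gauss_pdf (mu k) (Sig k) eps.

Definition reverse_pdf (d K : nat) (beta : nat -> R) (sigma : R) (t : nat)
    (pi_ : 'I_K -> R) (mu : 'I_K -> 'cV[R]_d) (Sig : 'I_K -> 'M[R]_d)
    (xt xprev : 'cV[R]_d) : \bar R :=
  integral_Rd (fun eps : 'cV[R]_d =>
    (ddim_cond_pdf beta sigma t xt
       ((Num.sqrt (alpha_bar beta t))^-1 *:
          (xt - Num.sqrt (1 - alpha_bar beta t) *: eps)) xprev
     * mixture_pdf pi_ mu Sig eps)%:E).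

End Defs.

(* Main.v *)
Require Import Defs.
From HB Require Import structures.
From mathcomp Require Import all_boot all_order all_algebra.
From mathcomp Require Import all_classical all_reals all_analysis.
From mathcomp Require Import measurable_realfun.
From mathcomp Require Import ring lra.
Set Implicit Arguments. Unset Strict Implicit. Unset Printing Implicit Defensive.
Import Order.TTheory GRing.Theory Num.Theory.
Local Open Scope ring_scope.
Section Form.
Variable R : realType.

Definition form n (X : 'M[R]_n) (u v : 'cV[R]_n) : R := (u^T *m X *m v) ord0 ord0.

Lemma formDl n (X : 'M[R]_n) u1 u2 v : form X (u1 + u2) v = form X u1 v + form X u2 v.
Proof. by rewrite /form linearD /= !mulmxDl mxE. Qed.
Lemma formDr n (X : 'M[R]_n) u v1 v2 : form X u (v1 + v2) = form X u v1 + form X u v2.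
Proof. by rewrite /form !mulmxDr mxE. Qed.
Lemma formZl n (X : 'M[R]_n) c u v : form X (c *: u) v = c * form X u v.
Proof. by rewrite /form linearZ /= -!scalemxAl mxE. Qed.
Lemma formZr n (X : 'M[R]_n) c u v : form X u (c *: v) = c * form X u v.
Proof. by rewrite /form -!scalemxAr mxE. Qed.
Lemma formNl n (X : 'M[R]_n) u v : form X (- u) v = - form X u v.
Proof. by rewrite -scaleN1r formZl mulN1r. Qed.
Lemma formNr n (X : 'M[R]_n) u v : form X u (- v) = - form X u v.
Proof. by rewrite -scaleN1r formZr mulN1r. Qed.
Lemma formBl n (X : 'M[R]_n) u1 u2 v : form X (u1 - u2) v = form X u1 v - form X u2 v.
Proof. by rewrite formDl formNl. Qed.
Lemma formBr n (X : 'M[R]_n) u v1 v2 : form X u (v1 - v2) = form X u v1 - form X u v2.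
Proof. by rewrite formDr formNr. Qed.
Lemma formXD n (X Y : 'M[R]_n) u v : form (X + Y) u v = form X u v + form Y u v.
Proof. by rewrite /form mulmxDr mulmxDl mxE. Qed.
Lemma formXZ n (X : 'M[R]_n) c u v : form (c *: X) u v = c * form X u v.
Proof. by rewrite /form -scalemxAr -scalemxAl mxE. Qed.
Lemma form_mulr n (X Y : 'M[R]_n) u v : form (X *m Y) u v = form X u (Y *m v).
Proof. by rewrite /form !mulmxA. Qed.
Lemma form_mull n (X Y : 'M[R]_n) u v : form (X *m Y) u v = form Y (X^T *m u) v.
Proof. by rewrite /form trmx_mul trmxK !mulmxA. Qed.
Lemma form_tr n (X : 'M[R]_n) u v : form X u v = form X^T v u.
Proof.
rewrite /form -[in LHS](trmxK (u^T *m X *m v)) [in LHS]mxE.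
by rewrite !trmx_mul trmxK mulmxA.
Qed.
Lemma form1 n (X : 'M[R]_n) u v : form X u v = form 1%:M u (X *m v).
Proof. by rewrite -form_mulr mul1mx. Qed.

End Form.

Section Split.
Variable R : realType.

Lemma form_split n (A : 'M[R]_(1 + n)) (z : 'cV[R]_n) (p : 'cV[R]_1) (w : 'cV[R]_n) :
  A^T = A -> drsubmx A *m z = dlsubmx A ->
  form A (col_mx p w) (col_mx p w) =
  form (drsubmx A) (w + z *m p) (w + z *m p) +
  (ulsubmx A - (dlsubmx A)^T *m z) ord0 ord0 * (p ord0 ord0) ^+ 2.
Proof.
move=> hs hz.
have hD : (drsubmx A)^T = drsubmx A by rewrite trmx_drsub hs.
have hB : ursubmx A = (dlsubmx A)^T by rewrite trmx_dlsub hs.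
set a := ulsubmx A; set c := dlsubmx A; set D := drsubmx A.
rewrite -[A in LHS]submxK -/a -/c -/D hB.
rewrite [p]mx11_scalar; set y := p ord0 ord0.
rewrite mul_mx_scalar !formDl !formDr !formZl !formZr.
have tr11 : forall (u v : 'cV[R]_n), (u^T *m v) ord0 ord0 = (v^T *m u) ord0 ord0.
  by move=> u v; rewrite -[in LHS](trmxK (u^T *m v)) [in LHS]mxE trmx_mul trmxK.
have e1 : form D w z = (w^T *m c) ord0 ord0 by rewrite /form -mulmxA hz.
have e2 : form D z w = (w^T *m c) ord0 ord0 by rewrite form_tr hD e1.
have e3 : form D z z = (c^T *m z) ord0 ord0 by rewrite /form -mulmxA hz tr11.
rewrite e1 e2 e3.
rewrite /form tr_col_mx mul_row_block mul_row_col tr_scalar_mx.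
rewrite !mul_scalar_mx !mul_mx_scalar -/c.
rewrite !mulmxDl -!scalemxAl !mxE.
have h : \sum_j c^T ord0 j * w j ord0 = \sum_j w^T ord0 j * c j ord0.
  by apply: eq_bigr => j _; rewrite !mxE mulrC.
rewrite h eqxx mulr1n; ring.
Qed.

Lemma det_split n (A : 'M[R]_(1 + n)) (z : 'cV[R]_n) :
  A^T = A -> drsubmx A *m z = dlsubmx A ->
  \det A = (ulsubmx A - (dlsubmx A)^T *m z) ord0 ord0 * \det (drsubmx A).
Proof.
move=> hs hz.
have hD : (drsubmx A)^T = drsubmx A by rewrite trmx_drsub hs.
have hB : ursubmx A = (dlsubmx A)^T by rewrite trmx_dlsub hs.
set a := ulsubmx A; set c := dlsubmx A; set D := drsubmx A.
have tr1 : forall M : 'M[R]_1, M^T = M by move=> M; rewrite [M]mx11_scalar tr_scalar_mx.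
have -> : A = block_mx 1%:M z^T 0 1%:M *m block_mx (a - c^T *m z) 0 c D.
  rewrite mulmx_block !mul1mx !mul0mx !add0r.
  have -> : z^T *m D = c^T by rewrite -[D in LHS]trmxK -trmx_mul hD hz.
  have -> : z^T *m c = c^T *m z by rewrite -[z^T *m c]tr1 trmx_mul trmxK.
  rewrite subrK /a /c /D -hB submxK //.
by rewrite det_mulmx det_ublock det_lblock !det1 !mul1r det_mx11.
Qed.

Definition posdef' n (A : 'M[R]_n) := A^T = A /\ forall v : 'cV[R]_n, v != 0 -> 0 < form A v v.

Lemma posdef_unit n (A : 'M[R]_n) : posdef' A -> A \in unitmx.
Proof.
move=> [hs hp]; rewrite unitmxE unitfE; apply/negP => /det0P [v nz vA].
have := hp v^T; rewrite trmx_eq0 nz => /(_ isT).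
by rewrite /form trmxK vA mul0mx mxE ltxx.
Qed.

Lemma posdef_sub n (A : 'M[R]_(1 + n)) : posdef' A -> posdef' (drsubmx A).
Proof.
move=> [hs hp]; split; first by rewrite trmx_drsub hs.
move=> v nz.
have hv : col_mx 0 v != 0 :> 'cV[R]_(1 + n) by rewrite col_mx_eq0 negb_and nz orbT.
have := hp _ hv.
suff -> : form A (col_mx 0 v) (col_mx 0 v) = form (drsubmx A) v v by [].
rewrite -[A in LHS]submxK /form tr_col_mx trmx0 mul_row_block mul_row_col.
by rewrite !mul0mx !add0r mulmx0 add0r.
Qed.

Definition schur_z n (A : 'M[R]_(1 + n)) := invmx (drsubmx A) *m dlsubmx A.
Definition schur_d n (A : 'M[R]_(1 + n)) :=
  (ulsubmx A - (dlsubmx A)^T *m schur_z A) ord0 ord0.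

Lemma schur_zP n (A : 'M[R]_(1 + n)) : posdef' A ->
  drsubmx A *m schur_z A = dlsubmx A.
Proof.
move=> hA; rewrite /schur_z mulmxA mulmxV ?mul1mx //.
exact/posdef_unit/posdef_sub.
Qed.

Lemma schur_d_gt0 n (A : 'M[R]_(1 + n)) : posdef' A -> 0 < schur_d A.
Proof.
move=> hA; have [hs hp] := hA.
have hv : col_mx 1%:M (- schur_z A) != 0 :> 'cV[R]_(1 + n).
  have h1 : (1%:M : 'cV[R]_1) != 0.
    by apply/eqP => /matrixP/(_ ord0 ord0); rewrite !mxE eqxx /= => /eqP; rewrite oner_eq0.
  by rewrite col_mx_eq0 negb_and h1.
have := hp _ hv.
rewrite (form_split _ _ hs (schur_zP hA)) mulmx1 addNr /form mulmx0 mxE.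
rewrite add0r (_ : (1%:M : 'cV[R]_1) ord0 ord0 = 1) ?expr1n ?mulr1 //.
by rewrite mxE.
Qed.

Lemma posdef_det n (A : 'M[R]_n) : posdef' A -> 0 < \det A.
Proof.
elim: n A => [|n IH] A hA; first by rewrite det_mx00.
have hA' : posdef' (A : 'M[R]_(1 + n)) by [].
rewrite (det_split (hA'.1) (schur_zP hA')).
by rewrite mulr_gt0 // ?IH ?schur_d_gt0 //; exact: posdef_sub.
Qed.

End Split.

Section Int1.
Variable R : realType.
Local Notation mu := (@lebesgue_measure R).

Lemma int_gauss1 (C d m : R) : 0 <= C -> 0 < d ->
  (\int[mu]_(x in [set: R]) (C * expR (- (d * (x - m) ^+ 2) / 2))%:E =
   (C * Num.sqrt (2 * pi / d))%:E)%E.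
Proof.
move=> C0 d0.
set s := Num.sqrt (d^-1).
have s2 : s ^+ 2 = d^-1 by rewrite sqr_sqrtr // invr_ge0 ltW.
have s0 : s != 0.
  by rewrite gt_eqF // sqrtr_gt0 invr_gt0.
have pk0 : 0 < normal_peak s by exact: normal_peak_gt0.
have hint := integral_normal_pdf m s.
rewrite normal_pdfE // in hint.
have hf : forall x, C * expR (- (d * (x - m) ^+ 2) / 2) =
    (C / normal_peak s) * (normal_peak s * normal_fun m s x).
  move=> x; rewrite /normal_fun s2 [RHS]mulrA divfK ?gt_eqF //; congr (C * expR _).
  rewrite -mulr_natr; field; rewrite gt_eqF //.
under eq_integral do rewrite hf EFinM.
rewrite ge0_integralZl //=; last 3 first.
- apply/measurable_EFinP; apply: measurable_funM => //.
  exact: measurable_normal_fun.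
- by move=> x _; rewrite lee_fin mulr_ge0 // ?normal_peak_ge0 ?normal_fun_ge0.
- by rewrite lee_fin divr_ge0 // ltW.
rewrite hint mule1; congr (_%:E); congr (C * _).
rewrite /normal_peak invrK s2; congr (Num.sqrt _).
by rewrite -mulr_natr; field; rewrite gt_eqF.
Qed.

End Int1.

Section Core.
Variable R : realType.
Local Notation mu := (@lebesgue_measure R).

Definition vec n (s : seq R) : 'cV[R]_n := \col_(i < n) nth 0 s i.

Lemma vec_cons n (x : R) (s : seq R) :
  vec n.+1 (x :: s) = col_mx (x%:M) (vec n s) :> 'cV[R]_(1 + n).
Proof.
apply/matrixP => i j; rewrite !mxE; case: splitP => k hk; rewrite !mxE.
  by rewrite hk (ord1 k) (ord1 j) /= mulr1n.
by rewrite hk.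
Qed.

Definition gsum n K (c : 'I_K -> R) (A : 'I_K -> 'M[R]_n) (m : 'I_K -> 'cV[R]_n)
  (s : seq R) : \bar R :=
  (\sum_(k < K) c k * expR (- form (A k) (vec n s - m k) (vec n s - m k) / 2))%:E.

Lemma meas_g (C d m : R) :
  measurable_fun [set: R] (fun x => (C * expR (- (d * (x - m) ^+ 2) / 2))%:E).
Proof.
apply/measurable_EFinP; apply: measurable_funM => //.
apply: measurableT_comp => //; apply: measurable_funM => //.
apply: measurableT_comp => //; apply: measurable_funM => //.
apply: measurable_funX => //; exact: measurable_funB.
Qed.

Lemma core n : forall K (c : 'I_K -> R) (A : 'I_K -> 'M[R]_n) (m : 'I_K -> 'cV[R]_n),
  (forall k, 0 <= c k) -> (forall k, posdef' (A k)) ->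
  iter_integral n (gsum c A m) =
  (\sum_(k < K) c k * Num.sqrt ((2 * pi) ^+ n / \det (A k)))%:E.
Proof.
elim: n => [|n IH] K c A m c0 hA.
  rewrite /= /gsum; congr (_%:E); apply: eq_bigr => k _.
  by rewrite /form mxE big_ord0 oppr0 mul0r expR0 expr0 det_mx00 divr1 sqrtr1.
pose A' k := drsubmx (A k : 'M[R]_(1 + n)).
pose z k := schur_z (A k : 'M[R]_(1 + n)).
pose dl k := schur_d (A k : 'M[R]_(1 + n)).
pose mu0 k := usubmx (m k : 'cV[R]_(1 + n)) ord0 ord0.
pose p x k := (x%:M - usubmx (m k : 'cV[R]_(1 + n))) : 'cV[R]_1.
pose m' x k := dsubmx (m k : 'cV[R]_(1 + n)) - z k *m p x k.
pose c' x k := c k * expR (- (dl k * (x - mu0 k) ^+ 2) / 2).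
have hA' k : posdef' (A' k) by exact: posdef_sub.
have hpt x : (fun s => gsum c A m (x :: s)) = gsum (c' x) A' (m' x).
  apply/funext => s; rewrite /gsum; congr (_%:E); apply: eq_bigr => k _.
  have hk : posdef' (A k : 'M[R]_(1 + n)) by [].
  rewrite vec_cons -[m k](@vsubmxK _ 1 n 1) (@opp_col_mx _ 1 n 1) (@add_col_mx _ 1 n 1).
  rewrite (form_split _ _ hk.1 (schur_zP hk)).
  have -> : vec n s - dsubmx (m k : 'cV[R]_(1 + n)) + schur_z (A k : 'M[R]_(1 + n)) *m
      (x%:M - usubmx (m k : 'cV[R]_(1 + n))) = vec n s - m' x k.
    by rewrite /m' opprD opprK addrA.
  have -> : (x%:M - usubmx (m k : 'cV[R]_(1 + n))) ord0 ord0 = x - mu0 k.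
    by rewrite /mu0 !mxE eqxx mulr1n.
  rewrite /c' /dl /schur_d /A'.
  have -> : forall F G : R, - (F + G) / 2 = - F / 2 + - G / 2.
    by move=> F G; field.
  by rewrite expRD; ring.
have hdl k : 0 < dl k by apply: schur_d_gt0; exact: hA.
transitivity (\int[mu]_(x in [set: R]) (\sum_(k < K)
    (c k * Num.sqrt ((2 * pi) ^+ n / \det (A' k))) *
      expR (- (dl k * (x - mu0 k) ^+ 2) / 2))%:E)%E.
  rewrite [LHS]/=; apply: eq_integral => x _; rewrite hpt IH //; last first.
    by move=> k; rewrite mulr_ge0 ?expR_ge0.
  by congr (_%:E); apply: eq_bigr => k _; rewrite /c'; ring.
under eq_integral do rewrite -sumEFin.
rewrite ge0_integral_sum //; last 2 first.
- by move=> k; exact: meas_g.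
- move=> k x _; rewrite lee_fin mulr_ge0 ?expR_ge0 // mulr_ge0 ?sqrtr_ge0 //.
rewrite (eq_bigr (fun k => ((c k * Num.sqrt ((2 * pi) ^+ n / \det (A' k))) *
    Num.sqrt (2 * pi / dl k))%:E)); last first.
  by move=> k _; rewrite int_gauss1 // mulr_ge0 ?sqrtr_ge0.
rewrite sumEFin; congr (_%:E); apply: eq_bigr => k _.
have hk : posdef' (A k : 'M[R]_(1 + n)) by [].
have hd' : 0 < \det (A' k) by apply: posdef_det.
rewrite (det_split hk.1 (schur_zP hk)) -/(schur_d _) -/(dl k) -/(A' k).
rewrite -mulrA -sqrtrM; last by rewrite divr_ge0 ?exprn_ge0 ?mulr_ge0 ?pi_ge0 // ltW.
congr (c k * Num.sqrt _); rewrite exprS.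
field; rewrite !gt_eqF //.
Qed.
End Core.

Section Quad.
Variable R : realType.

Lemma form1_ge0 d (v : 'cV[R]_d) : 0 <= form 1%:M v v.
Proof.
rewrite /form mulmx1 mxE; apply: sumr_ge0 => j _; rewrite mxE.
by rewrite -expr2 sqr_ge0.
Qed.

Lemma form1C d (u v : 'cV[R]_d) : form 1%:M u v = form 1%:M v u.
Proof. by rewrite form_tr tr_scalar_mx. Qed.

Lemma formS d (a : R) (u v : 'cV[R]_d) : form (a%:M) u v = a * form 1%:M u v.
Proof. by rewrite -[a%:M]scalemx1 formXZ. Qed.

Variables (d : nat) (S : 'M[R]_d) (g sg : R).
Hypothesis hS : posdef' S.
Hypothesis sg0 : 0 < sg.
Let P := invmx S.
Let A := (g ^+ 2 / sg ^+ 2) *: 1%:M + P.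
Let M := g ^+ 2 *: S + sg ^+ 2 *: 1%:M.
Let N := invmx M.

Lemma S_unit : S \in unitmx. Proof. exact: posdef_unit. Qed.
Lemma PS : P *m S = 1%:M. Proof. exact: mulVmx S_unit. Qed.
Lemma SP : S *m P = 1%:M. Proof. exact: mulmxV S_unit. Qed.
Lemma Pt : P^T = P. Proof. by rewrite /P trmx_inv hS.1. Qed.

Lemma A_posdef : posdef' A.
Proof.
split.
  rewrite /A linearD /= linearZ /= tr_scalar_mx; congr (_ + _); exact: Pt.
move=> v nz; rewrite /A formXD formXZ.
have h1 := form1_ge0 v.
have h2 : 0 < form P v v.
  have -> : form P v v = form S (P *m v) (P *m v).
    by rewrite -form_mulr SP form1C -form1.
  apply: hS.2; apply: contra nz => /eqP h.
  by rewrite -[v]mul1mx -SP -mulmxA h mulmx0.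
have h3 : 0 <= g ^+ 2 / sg ^+ 2 by rewrite divr_ge0 ?sqr_ge0.
by rewrite ltr_wpDl // mulr_ge0.
Qed.

Lemma AS : A *m S = (sg ^+ 2)^-1 *: M.
Proof.
rewrite /A /M mulmxDl PS -scalemxAl mul1mx scalerDr scalerA.
have sg2 : sg ^+ 2 != 0 by rewrite gt_eqF // exprn_gt0.
by rewrite mulrC (mulrC (_ ^-1)) scalerA mulVf // scale1r.
Qed.

Lemma detM : \det M = sg ^+ 2 ^+ d * (\det A * \det S).
Proof.
have sg2 : sg ^+ 2 != 0 by rewrite gt_eqF // exprn_gt0.
have -> : M = sg ^+ 2 *: (A *m S) by rewrite AS scalerA divff // scale1r.
by rewrite detZ det_mulmx.
Qed.

Lemma M_unit : M \in unitmx.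
Proof.
rewrite unitmxE unitfE detM.
have := posdef_det A_posdef; have := posdef_det hS => h1 h2.
by rewrite gt_eqF // mulr_gt0 ?exprn_gt0 ?mulr_gt0.
Qed.

Lemma Nt : N^T = N.
Proof.
rewrite /N trmx_inv /M linearD /= !linearZ /= tr_scalar_mx.
by rewrite hS.1.
Qed.

Lemma quad_id (w dl : 'cV[R]_d) :
  form ((sg ^+ 2)^-1%:M) (w - g *: dl) (w - g *: dl) + form P dl dl =
  form A (dl - g *: (S *m (N *m w))) (dl - g *: (S *m (N *m w))) + form N w w.
Proof.
have sg2 : sg ^+ 2 != 0 by rewrite gt_eqF // exprn_gt0.
have ASN : A *m S *m N = (sg ^+ 2)^-1 *: 1%:M.
  by rewrite AS -scalemxAl mulmxV // M_unit.
have At : A^T = A by have [] := A_posdef.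
set y := S *m (N *m w).
have e1 : form A dl y = (sg ^+ 2)^-1 * form 1%:M dl w.
  by rewrite /y -form_mulr -form_mulr ASN formXZ.
have e2 : form A y dl = (sg ^+ 2)^-1 * form 1%:M dl w.
  by rewrite form_tr At e1.
have e3 : form A y y = (sg ^+ 2)^-1 * form (S *m N) w w.
  rewrite {2}/y -form_mulr -form_mulr ASN formXZ; congr (_ * _).
  by rewrite form1C /y mulmxA -form1.
have e4 : g ^+ 2 * ((sg ^+ 2)^-1 * form (S *m N) w w) + form N w w =
    (sg ^+ 2)^-1 * form 1%:M w w.
  rewrite -formXZ -formXZ -formXD -formXZ; congr (form _ w w).
  rewrite -[in RHS](mulmxV M_unit) /M mulmxDl -!scalemxAl mul1mx scalerDr !scalerA.
  by rewrite mulVf // scale1r mulrC.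
rewrite formS !formBl !formBr !formZl !formZr.
rewrite e1 e2 e3 (form1C w dl) /A formXD formXZ.
have e4' : form N w w = (sg ^+ 2)^-1 * form 1%:M w w -
    g ^+ 2 * ((sg ^+ 2)^-1 * form (S *m N) w w) by rewrite -e4 addrAC subrr add0r.
by rewrite e4'; field; rewrite gt_eqF.
Qed.

End Quad.

Section Main.
Variable R : realType.

Lemma gaussE d (m : 'cV[R]_d) (S : 'M[R]_d) x :
  gauss_pdf m S x =
  (Num.sqrt ((2 * pi) ^+ d * \det S))^-1 * expR (- form (invmx S) (x - m) (x - m) / 2).
Proof. by []. Qed.

Lemma ab_rec (beta : nat -> R) j :
  alpha_bar beta j.+1 = alpha_bar beta j * alpha beta j.+1.
Proof. by rewrite /alpha_bar big_nat_recr. Qed.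

Lemma ab_bounds (beta : nat -> R) T :
  (forall i, (1 <= i <= T)%N -> 0 < beta i < 1) ->
  forall j, (j <= T)%N -> 0 < alpha_bar beta j <= 1 /\ ((1 <= j)%N -> alpha_bar beta j < 1).
Proof.
move=> hb; elim=> [|j IH] hj.
  by rewrite /alpha_bar big_geq //; split => //; rewrite ltr01 lexx.
have [/andP [h0 h1] _] := IH (ltnW hj).
have /andP [b0 b1] := hb j.+1 hj.
rewrite ab_rec /alpha.
have hab := mulr_gt0 h0 b0.
have hab2 : 0 < alpha_bar beta j * (1 - beta j.+1) by rewrite mulr_gt0 // subr_gt0.
rewrite mulrBr mulr1 in hab2 *.
split; last by move=> _; lra.
by apply/andP; split; lra.
Qed.

End Main.

Unset Implicit Arguments.

Theorem theorem1 (R : realType) (T d K : nat) (beta : nat -> R) (sigma : R)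
    (t : nat) (xt : 'cV[R]_d)
    (pi_ : 'I_K -> R) (mu : 'I_K -> 'cV[R]_d) (Sig : 'I_K -> 'M[R]_d) :
  (forall i, (1 <= i <= T)%N -> 0 < beta i < 1) ->
  0 < sigma ->
  0 <= 1 - alpha_bar beta t.-1 - sigma ^+ 2 ->
  (2 <= t <= T)%N ->
  (forall k, 0 <= pi_ k <= 1) ->
  \sum_(k < K) pi_ k = 1 ->
  (forall k, posdef (Sig k)) ->
  forall xprev : 'cV[R]_d,
    reverse_pdf beta sigma t pi_ mu Sig xt xprev =
    (\sum_(k < K) pi_ k *
       gauss_pdf
         (Num.sqrt (alpha_bar beta t.-1) *:
            ((Num.sqrt (alpha_bar beta t))^-1 *:
               (xt - Num.sqrt (1 - alpha_bar beta t) *: mu k))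
          + Num.sqrt (1 - alpha_bar beta t.-1 - sigma ^+ 2) *: mu k)
         ((Num.sqrt (1 - alpha_bar beta t.-1 - sigma ^+ 2)
             - Num.sqrt (1 - alpha_bar beta t) / Num.sqrt (alpha beta t)) ^+ 2
            *: Sig k + sigma ^+ 2 *: 1%:M)
         xprev)%:E.
Proof.
move=> hb hsg hlam /andP [t2 tT] hpi hsum hSig xprev.
have hS k : posdef' (Sig k) by exact: hSig.
have t0 : (0 < t)%N by apply: leq_trans t2.
have habt : alpha_bar beta t = alpha_bar beta t.-1 * alpha beta t.
  by rewrite -{1}(prednK t0) ab_rec prednK.
have [/andP [ab1_0 _] _] := ab_bounds hb (leq_trans (leq_pred t) tT).
have [/andP [abt0 _] abt1] := ab_bounds hb tT.
have {}abt1 := abt1 t0.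
have at0 : 0 < alpha beta t.
  by have /andP [_ b1] := hb t (andb_true_intro (conj t0 tT)); rewrite /alpha subr_gt0.
set ab1 := alpha_bar beta t.-1 in habt ab1_0 hlam *.
set abt := alpha_bar beta t in habt abt0 abt1 *.
set lam := Num.sqrt (1 - ab1 - sigma ^+ 2).
set r := Num.sqrt abt.
set s := Num.sqrt (1 - abt).
set sa := Num.sqrt (alpha beta t).
have r0 : 0 < r by rewrite sqrtr_gt0.
have s0 : 0 < s by rewrite sqrtr_gt0 subr_gt0.
have sa0 : 0 < sa by rewrite sqrtr_gt0.
have hr : r = Num.sqrt ab1 * sa by rewrite /r habt sqrtrM // ltW.
set c0 := Num.sqrt ab1 / r.
set g := lam - c0 * s.
have hg : lam - s / sa = g.
  rewrite /g /c0 hr; congr (_ - _); field; rewrite gt_eqF // ?sqrtr_gt0 //=.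
  by rewrite gt_eqF // sqrtr_gt0.
pose P k := invmx (Sig k).
pose M k := g ^+ 2 *: Sig k + sigma ^+ 2 *: 1%:M.
pose N k := invmx (M k).
pose A k := (g ^+ 2 / sigma ^+ 2) *: 1%:M + P k.
pose z := xprev - c0 *: xt.
pose w k := z - g *: mu k.
pose m k := mu k + g *: (Sig k *m (N k *m w k)).
pose X : R := (2 * pi) ^+ d.
pose C k := pi_ k * ((Num.sqrt (X * (sigma ^+ 2) ^+ d))^-1 *
   (Num.sqrt (X * \det (Sig k)))^-1 * expR (- form (N k) (w k) (w k) / 2)).
have hX : 0 < X by rewrite exprn_gt0 // mulr_gt0 ?pi_gt0.
have hq0 : 0 < (sigma ^+ 2) ^+ d by rewrite !exprn_gt0.
have hdS k : 0 < \det (Sig k) by apply: posdef_det.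
have hpt e : ddim_cond_pdf beta sigma t xt (r^-1 *: (xt - s *: e)) xprev *
    mixture_pdf pi_ mu Sig e = \sum_(k < K) C k * expR (- form (A k) (e - m k) (e - m k) / 2).
  rewrite /ddim_cond_pdf gaussE -/ab1 -/abt -/lam -/r -/s.
  have hmean : Num.sqrt ab1 *: (r^-1 *: (xt - s *: e)) + lam *: (s^-1 *: (xt - r *: (r^-1 *: (xt - s *: e)))) = c0 *: xt + g *: e.
    apply/matrixP => i j; rewrite !mxE /g /c0; field; rewrite !gt_eqF //.
  rewrite hmean scalemx1 invmx_scalar det_scalar /mixture_pdf mulr_sumr.
  apply: eq_bigr => k _.
  rewrite gaussE.
  have hx : xprev - (c0 *: xt + g *: e) = w k - g *: (e - mu k).
    by rewrite /w /z; apply/matrixP => i j; rewrite !mxE; ring.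
  have he : e - m k = (e - mu k) - g *: (Sig k *m (N k *m w k)) by rewrite /m opprD addrA.
  rewrite hx he /C /A /N /M /P.
  have hq := quad_id g (hS k) hsg (w k) (e - mu k).
  set F1 := form _ (w k - _) _ in hq *.
  set FP := form (invmx (Sig k)) _ _ in hq *.
  set FA := form _ (e - mu k - _) _ in hq *.
  set FN := form _ (w k) (w k) in hq *.
  have hF1 : F1 = FA + FN - FP by rewrite -hq addrK.
  rewrite hF1.
  have -> : - (FA + FN - FP) / 2 = - FA / 2 + - FN / 2 + - (- FP / 2) by field.
  rewrite !expRD expRN.
  have := expR_gt0 (- FP / 2) => hP.
  field; rewrite !gt_eqF // ?sqrtr_gt0 ?mulr_gt0 //.
have hA k : posdef' (A k) by apply: A_posdef.
have hC k : 0 <= C k.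
  have /andP [p0 _] := hpi k.
  by rewrite /C mulr_ge0 // mulr_ge0 ?expR_ge0 // mulr_ge0 // invr_ge0 sqrtr_ge0.
rewrite /reverse_pdf /integral_Rd.
rewrite (_ : iter_integral d _ = iter_integral d (gsum C A m)); last first.
  congr iter_integral; apply/funext => s1; rewrite /gsum /vec; congr (_%:E).
  exact: hpt.
rewrite core //; congr (_%:E); apply: eq_bigr => k _.
rewrite hg gaussE.
have hm : Num.sqrt ab1 *: (r^-1 *: (xt - s *: mu k)) + lam *: mu k = c0 *: xt + g *: mu k.
  by apply/matrixP => i j; rewrite !mxE /g /c0; ring.
rewrite hm (_ : xprev - (c0 *: xt + g *: mu k) = w k); last by rewrite /w /z opprD addrA.
rewrite (detM g (hS k) hsg) -/(A k) -/X.
have hA0 : 0 < \det (A k) by apply: posdef_det.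
rewrite /C -/(M k) -/(N k).
rewrite !sqrtrM ?(ltW hX) ?(ltW hq0) ?(ltW hA0) // sqrtrV ?(ltW hA0) //.
have h1 : 0 < Num.sqrt X by rewrite sqrtr_gt0.
have h2 : 0 < Num.sqrt ((sigma ^+ 2) ^+ d) by rewrite sqrtr_gt0.
have h3 : 0 < Num.sqrt (\det (A k)) by rewrite sqrtr_gt0.
have h4 : 0 < Num.sqrt (\det (Sig k)) by rewrite sqrtr_gt0.
field; rewrite !gt_eqF //.
Qed.
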